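(* Let $n\ge 2$. The completely isolated subsemigroups of $\mathcal{PI}^{\ast}_n$ are exactly $\mathcal{PI}^{\ast}_n$, $\mathcal{S}_n$ and $\mathcal{PI}^{\ast}_n\setminus\mathcal{S}_n$.
   Context: Let $X=\{1,\dots,n\}$, $X'=\{1',\dots,n'\}$. $\mathcal{PI}^{\ast}_n$ is the set of partitions of $X\cup X'$ each of whose blocks is a singleton (point) or a generalised line (a set meeting both $X$ and $X'$), with product $\star$: with $X''$ a third copy of $X$, regard $\alpha$ as a partition of $X\cup X''$ and $\beta$ as a partition of $X''\cup X'$, let $\sim$ be the equivalence on $X\cup X''\cup X'$ generated by the blocks of both; $\alpha\star\beta$ is the partition of $X\cup X'$ in which distinct $u,v$ are in one block iff $u\sim v$ and the $\sim$-class of $u$ contains no singleton block of $\alpha$ or $\beta$. $\mathcal{S}_n$ is its group of units: elements all of whose blocks are $\{x,\pi(x)'\}$ for a permutation $\pi$. A subsemigroup $T$ of a semigroup $S$ is completely isolated if for all $a,b\in S$, $ab\in T$ implies $a\in T$ or $b\in T$. *)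

(* Defs.v *)
From mathcomp Require Import all_boot all_fingroup.
Set Implicit Arguments. Unset Strict Implicit. Unset Printing Implicit Defensive.

(* X ∪ X' : inl x = x ∈ X, inr x = x' ∈ X'. *)
Definition pt (n : nat) : finType := ('I_n + 'I_n)%type.

Definition part (n : nat) : finType := {set {set pt n}}.

(* Elements of PI*_n: partitions of X ∪ X' whose blocks are points
   (singletons) or generalised lines (meeting both X and X'). *)
Definition isPI (n : nat) (a : part n) : bool :=
  partition a [set: pt n] &&
  [forall B in a, (#|B| == 1) ||
     ([exists x : 'I_n, inl x \in B] && [exists y : 'I_n, inr y \in B])].

Definition PIset (n : nat) : {set part n} := [set a | isPI a].

Definition isUnit (n : nat) (a : part n) : bool :=
  [exists p : 'S_n, a == [set [set (inl x : pt n); inr (p x)] | x : 'I_n]].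

(* Three copies X, X'', X' :  inl (inl x) = x, inl (inr x) = x'', inr x = x'. *)
Definition vt (n : nat) : finType := (('I_n + 'I_n) + 'I_n)%type.

(* alpha as a partition of X ∪ X'' *)
Definition embA n (u : pt n) : vt n :=
  match u with inl x => inl (inl x) | inr x => inl (inr x) end.
(* beta as a partition of X'' ∪ X' *)
Definition embB n (u : pt n) : vt n :=
  match u with inl x => inl (inr x) | inr x => inr x end.
Definition embO n (u : pt n) : vt n :=
  match u with inl x => inl (inl x) | inr x => inr x end.

Definition genrel n (a b : part n) : rel (vt n) := fun u v =>
  [exists B in a, (u \in (@embA n) @: B) && (v \in (@embA n) @: B)] ||
  [exists B in b, (u \in (@embB n) @: B) && (v \in (@embB n) @: B)].

Definition singpt n (a b : part n) (w : vt n) : bool :=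
  [exists B in a, (#|B| == 1) && (w \in (@embA n) @: B)] ||
  [exists B in b, (#|B| == 1) && (w \in (@embB n) @: B)].

Definition badpt n (a b : part n) (w : vt n) : bool :=
  [exists z, connect (genrel a b) w z && singpt a b z].

Definition relstar n (a b : part n) (u v : pt n) : bool :=
  (u == v) ||
  (connect (genrel a b) (embO u) (embO v) && ~~ badpt a b (embO u)).

Definition star n (a b : part n) : part n :=
  [set [set v | relstar a b u v] | u : pt n].

(* completely isolated subsemigroup of PI*_n (subsemigroups nonempty) *)
Definition compl_isolated_subsemigroup n (T : {set part n}) : Prop :=
  [/\ T \subset PIset n, T != set0,
      (forall a b, a \in T -> b \in T -> star a b \in T) &
      (forall a b, a \in PIset n -> b \in PIset n ->
                   star a b \in T -> (a \in T) || (b \in T))].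

(* Main.v *)
Require Import Defs.
From mathcomp Require Import all_boot all_fingroup.
Set Implicit Arguments. Unset Strict Implicit. Unset Printing Implicit Defensive.

Section Basics.
Variable n : nat.
Implicit Types (a b c : part n) (u v : pt n) (w : vt n).

Lemma genrel_sym a b : symmetric (genrel a b).
Proof.
move=> w1 w2; rewrite /genrel; congr orb; apply: eq_existsb => B;
  by rewrite [X in _ && X]andbC.
Qed.

Lemma conn_sym a b : connect_sym (genrel a b).
Proof. exact/sym_connect_sym/genrel_sym. Qed.

Lemma bad_conn a b w1 w2 : connect (genrel a b) w1 w2 -> badpt a b w1 = badpt a b w2.
Proof.
move=> c; rewrite /badpt; apply: eq_existsb => z.
by rewrite (same_connect (conn_sym a b) c).
Qed.

Lemma relstar_equiv a b : equivalence_rel (relstar a b).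
Proof.
move=> x y z; split; first by rewrite /relstar eqxx.
rewrite /relstar; case: (eqVneq x y) => [-> //|_] /= /andP[cxy nb].
have Hb := bad_conn cxy.
rewrite -Hb (negbTE nb) !andbT (same_connect (conn_sym a b) cxy).
case: (eqVneq x z) => [<-|_] /=.
  by rewrite -(same_connect (conn_sym a b) cxy) connect0 orbT.
case: (eqVneq y z) => [<-|_] //=.
by rewrite connect0.
Qed.

Lemma star_eqp a b : star a b = equivalence_partition (relstar a b) setT.
Proof.
rewrite /star /equivalence_partition; apply/setP => B.
apply/imsetP/imsetP => [[u _ ->]|[u _ ->]]; exists u => //; apply/setP => v;
  by rewrite !inE.
Qed.

Lemma star_partition a b : partition (star a b) setT.
Proof.
rewrite star_eqp; apply: equivalence_partitionP => x y z _ _ _.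
exact: relstar_equiv.
Qed.

Lemma pblock_star a b u v : (v \in pblock (star a b) u) = relstar a b u v.
Proof.
rewrite star_eqp pblock_equivalence_partition // ?inE //.
move=> x y z _ _ _; exact: relstar_equiv.
Qed.

Lemma part_ext c1 c2 : partition c1 setT -> partition c2 setT ->
  (forall u v, (v \in pblock c1 u) = (v \in pblock c2 u)) -> c1 = c2.
Proof.
move=> p1 p2 H.
rewrite -(equivalence_partition_pblock p1) -(equivalence_partition_pblock p2).
rewrite /equivalence_partition; apply: eq_imset => u; apply/setP => v.
by rewrite !inE H.
Qed.

Lemma pblock_self c u : partition c setT -> u \in pblock c u.
Proof. by move=> p; rewrite mem_pblock (cover_partition p) inE. Qed.

Lemma pblock_in c u : partition c setT -> pblock c u \in c.
Proof. by move=> p; rewrite pblock_mem // (cover_partition p) inE. Qed.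

Lemma pblock_same c u v : partition c setT -> v \in pblock c u -> pblock c v = pblock c u.
Proof. by move=> p; apply: same_pblock; case/and3P: p. Qed.

Lemma pblock_def c u B : partition c setT -> B \in c -> u \in B -> pblock c u = B.
Proof. by move=> p; apply: def_pblock; case/and3P: p. Qed.

Lemma preim_pblock (K : eqType) (f : pt n -> K) u v :
  (v \in pblock (preim_partition f setT) u) = (f u == f v).
Proof.
rewrite pblock_equivalence_partition ?inE //.
by move=> x y z _ _ _; split=> // /eqP ->.
Qed.

Lemma preim_part (K : eqType) (f : pt n -> K) : partition (preim_partition f setT) setT.
Proof. exact: preim_partitionP. Qed.


Lemma key_conn (K : eqType) a b (k : vt n -> K) :
  (forall w1 w2, genrel a b w1 w2 -> k w1 = k w2) ->
  (forall w1 w2, k w1 = k w2 -> connect (genrel a b) w1 w2) ->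
  forall w1 w2, connect (genrel a b) w1 w2 = (k w1 == k w2).
Proof.
move=> H1 H2 w1 w2; apply/idP/eqP; last exact: H2.
case/connectP=> p + ->; elim: p w1 => //= y p IH w1 /andP[e pth].
by rewrite (H1 _ _ e); apply: IH.
Qed.

Lemma key_bad (K : eqType) a b (k : vt n -> K) :
  (forall w1 w2, genrel a b w1 w2 -> k w1 = k w2) ->
  (forall w1 w2, k w1 = k w2 -> connect (genrel a b) w1 w2) ->
  forall w, badpt a b w = [exists z, (k w == k z) && singpt a b z].
Proof.
move=> H1 H2 w; rewrite /badpt; apply: eq_existsb => z.
by rewrite (key_conn H1 H2).
Qed.

Lemma gA a b u v : partition a setT -> v \in pblock a u -> genrel a b (embA u) (embA v).
Proof.
move=> p h; apply/orP; left; apply/existsP; exists (pblock a u).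
by rewrite pblock_in // !imset_f // pblock_self.
Qed.

Lemma gB a b u v : partition b setT -> v \in pblock b u -> genrel a b (embB u) (embB v).
Proof.
move=> p h; apply/orP; right; apply/existsP; exists (pblock b u).
by rewrite pblock_in // !imset_f // pblock_self.
Qed.

Lemma genrelE a b w1 w2 : partition a setT -> partition b setT -> genrel a b w1 w2 ->
  (exists u v, [/\ v \in pblock a u, w1 = embA u & w2 = embA v]) \/
  (exists u v, [/\ v \in pblock b u, w1 = embB u & w2 = embB v]).
Proof.
move=> pa pb; case/orP => /existsP[B /andP[BP /andP[/imsetP[u uB ->] /imsetP[v vB ->]]]].
  by left; exists u, v; split=> //; rewrite (pblock_def pa BP uB).
by right; exists u, v; split=> //; rewrite (pblock_def pb BP uB).
Qed.

Lemma singpt_blk c u B : partition c setT -> B \in c -> #|B| == 1 -> u \in B ->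
  pblock c u = [set u].
Proof.
move=> p BP /cards1P[y Bdef]; rewrite Bdef inE => /eqP ->.
by apply: (pblock_def p); [rewrite -Bdef | rewrite inE].
Qed.

Lemma singptE a b w : partition a setT -> partition b setT -> singpt a b w ->
  (exists u, pblock a u = [set u] /\ w = embA u) \/
  (exists u, pblock b u = [set u] /\ w = embB u).
Proof.
move=> pa pb; case/orP => /existsP[B /andP[BP /andP[c1 /imsetP[u uB ->]]]].
  by left; exists u; rewrite (singpt_blk pa BP c1 uB).
by right; exists u; rewrite (singpt_blk pb BP c1 uB).
Qed.

Lemma singptA a b u : partition a setT -> pblock a u = [set u] -> singpt a b (embA u).
Proof.
move=> p h; apply/orP; left; apply/existsP; exists (pblock a u).
by rewrite pblock_in // h cards1 eqxx imset_f ?inE.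
Qed.

Lemma singptB a b u : partition b setT -> pblock b u = [set u] -> singpt a b (embB u).
Proof.
move=> p h; apply/orP; right; apply/existsP; exists (pblock b u).
by rewrite pblock_in // h cards1 eqxx imset_f ?inE.
Qed.

Lemma star_pt a b u : badpt a b (embO u) -> pblock (star a b) u = [set u].
Proof.
move=> h; apply/setP => v; rewrite pblock_star /relstar h andbF orbF inE.

by rewrite eq_sym.
Qed.

Lemma PI_part c : isPI c -> partition c setT.
Proof. by case/andP. Qed.

Lemma PI_line c u : isPI c -> pblock c u != [set u] ->
  (exists x, inl x \in pblock c u) /\ (exists y, inr y \in pblock c u).
Proof.
case/andP=> p /forallP /(_ (pblock c u)); rewrite pblock_in //= => /orP[c1|].
  by rewrite (singpt_blk p (pblock_in u p) c1 (pblock_self u p)) eqxx.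
by case/andP=> /existsP[x hx] /existsP[y hy] _; split; [exists x|exists y].
Qed.

Lemma PI_of c : partition c setT ->
  (forall u, pblock c u = [set u] \/
     ((exists x, inl x \in pblock c u) /\ (exists y, inr y \in pblock c u))) -> isPI c.
Proof.
move=> p H; apply/andP; split => //; apply/forallP => B; apply/implyP => BP.
have /set0Pn[u uB] : B != set0 by apply: (partition_neq0 p BP).
rewrite -(pblock_def p BP uB); case: (H u) => [->|[[x hx] [y hy]]].
  by rewrite cards1.
by apply/orP; right; apply/andP; split; apply/existsP; [exists x|exists y].
Qed.

End Basics.

Section Perm.
Variable n : nat.
Implicit Types (a b c : part n) (u v : pt n) (w : vt n) (g h : 'S_n).

Definition permp g : part n := [set [set (inl x : pt n); inr (g x)] | x : 'I_n].
Definition pk g (u : pt n) : 'I_n := match u with inl x => x | inr y => (g^-1)%g y end.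
Definition zero : part n := preim_partition (fun u : pt n => u) setT.

Lemma pk_eq g x y : (x == pk g (inr y)) = (inr y == inr (g x) :> pt n).
Proof.
rewrite /= -(inj_eq (@perm_inj _ g)) permKV.
by apply/eqP/eqP => [->|[->]].
Qed.

Lemma blk_eq g x :
  [set v in setT | pk g (inl x) == pk g v] = [set (inl x : pt n); inr (g x)].
Proof.
apply/setP => v; rewrite !inE; case: v => [x'|y] /=.
  by apply/eqP/orP => [->|[/eqP[->]|//]]; [left|].
by rewrite pk_eq.
Qed.

Lemma permpE g : permp g = preim_partition (pk g) setT.
Proof.
apply/setP => B; apply/imsetP/imsetP => [[x _ ->]|[u _ ->]].
  by exists (inl x) => //; rewrite blk_eq.
case: u => [x|y]; first by exists x => //; rewrite blk_eq.
exists ((g^-1)%g y) => //; rewrite -blk_eq; apply/setP => v; rewrite !inE //.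
Qed.

Lemma permp_part g : partition (permp g) setT.
Proof. by rewrite permpE; apply: preim_part. Qed.

Lemma permp_pblock g u v : (v \in pblock (permp g) u) = (pk g u == pk g v).
Proof. by rewrite permpE preim_pblock. Qed.

Lemma permp_PI g : isPI (permp g).
Proof.
apply: PI_of; first exact: permp_part.
move=> u; right; split; [exists (pk g u)|exists (g (pk g u))];
  by rewrite permp_pblock //= permK.
Qed.

Lemma permp_nopt g u : pblock (permp g) u != [set u].
Proof.
apply/negP => /eqP h.
have h1 : inl (pk g u) \in pblock (permp g) u by rewrite permp_pblock.
have h2 : inr (g (pk g u)) \in pblock (permp g) u by rewrite permp_pblock /= permK.
by move: h1 h2; rewrite h !inE => /eqP <-.
Qed.

Lemma zero_pblock u : pblock zero u = [set u].
Proof. by apply/setP => v; rewrite preim_pblock inE eq_sym. Qed.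

Lemma zero_part : partition zero setT.
Proof. exact: preim_part. Qed.

Lemma zero_PI : isPI zero.
Proof. by apply: PI_of; [exact: zero_part | move=> u; left; exact: zero_pblock]. Qed.

Definition psi g (u : pt n) : pt n := match u with inl x => inl (g x) | inr y => inr y end.
Definition phi g (w : vt n) : pt n :=
  match w with inl (inl x) => inl (g x) | inl (inr y) => inl y | inr y => inr y end.

Lemma psi_inj g : injective (psi g).
Proof.
case=> [x|y] [x'|y'] //= [].
by move/perm_inj ->.
Qed.

Lemma relabel g a u v : isPI a ->
  relstar (permp g) a u v = (psi g v \in pblock a (psi g u)).
Proof.
move=> PIa; have pa := PI_part PIa; have pp := permp_part g.
pose k w := pblock a (phi g w).
have phiB u' : phi g (embB u') = u' by case: u'.
have phiO u' : phi g (embO u') = psi g u' by case: u'.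
have H1 : forall w1 w2, genrel (permp g) a w1 w2 -> k w1 = k w2.
  move=> w1 w2 /(genrelE pp pa) [] [u1 [v1 [hv -> ->]]].
    rewrite permp_pblock in hv; rewrite /k.
    have E : forall u', phi g (embA u') = inl (g (pk g u')).
      by case=> [x|y] //=; rewrite permKV.
    by rewrite !E (eqP hv).
  by rewrite /k !phiB (pblock_same pa hv).
have Hw : forall w, connect (genrel (permp g) a) w (embB (phi g w)).
  case=> [[x|y]|y] /=; try exact: connect0.
  apply: connect1; apply: (@gA _ _ _ (inl x) (inr (g x))) => //.
  by rewrite permp_pblock /= permK.
have H2 : forall w1 w2, k w1 = k w2 -> connect (genrel (permp g) a) w1 w2.
  move=> w1 w2 e; apply: connect_trans (Hw w1) _.
  rewrite (conn_sym (permp g) a); apply: connect_trans (Hw w2) _.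
  apply: connect1; apply: gB => //; rewrite /k in e; rewrite -e pblock_self //.
have Hbad : badpt (permp g) a (embO u) = (pblock a (psi g u) == [set psi g u]).
  rewrite (key_bad H1 H2); apply/existsP/eqP => [[z /andP[/eqP e s]]|e].
    case: (singptE pp pa s) => [[u' [h _]]|[u' [h zE]]].
      by move: (permp_nopt g u'); rewrite h eqxx.
    move: e; rewrite zE /k phiO phiB h => e.
    by move: (pblock_self (psi g u) pa); rewrite e inE => /eqP ->.
  exists (embB (psi g u)); rewrite /k phiO phiB eqxx /=.
  by apply: singptB.
rewrite /relstar Hbad (key_conn H1 H2) /k !phiO.
case: (boolP (pblock a (psi g u) == [set psi g u])) => [/eqP e|ne];
  rewrite ?andbF ?andbT ?orbF.
  by rewrite e inE (inj_eq (@psi_inj g)) eq_sym.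
have [_ ti _] := and3P pa.
rewrite (@eq_pblock _ a (psi g u) (psi g v) ti) ?(cover_partition pa) ?inE //.
case: (eqVneq u v) => [->|] //=; by rewrite pblock_self.
Qed.

End Perm.
Arguments zero {n}.

Section Closure.
Variable n : nat.
Implicit Types (a b c : part n) (u v : pt n) (w : vt n) (g h : 'S_n).

Lemma sing_bad a b w : singpt a b w -> badpt a b w.
Proof. by move=> s; apply/existsP; exists w; rewrite connect0. Qed.

Lemma nb_A a b u : isPI a -> ~~ badpt a b (embA u) ->
  (exists x, connect (genrel a b) (embA u) (inl (inl x))) /\
  (exists y, connect (genrel a b) (embA u) (inl (inr y))).
Proof.
move=> PIa nb; have pa := PI_part PIa.
have ne : pblock a u != [set u].
  apply/eqP => e; move/negP: nb; apply; apply: sing_bad; exact: singptA.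
case: (PI_line PIa ne) => [[x hx] [y hy]]; split.
  by exists x; apply: connect1; apply: (@gA _ _ _ u (inl x)).
by exists y; apply: connect1; apply: (@gA _ _ _ u (inr y)).
Qed.

Lemma nb_B a b u : isPI b -> ~~ badpt a b (embB u) ->
  (exists x, connect (genrel a b) (embB u) (inl (inr x))) /\
  (exists y, connect (genrel a b) (embB u) (inr y)).
Proof.
move=> PIb nb; have pb := PI_part PIb.
have ne : pblock b u != [set u].
  apply/eqP => e; move/negP: nb; apply; apply: sing_bad; exact: singptB.
case: (PI_line PIb ne) => [[x hx] [y hy]]; split.
  by exists x; apply: connect1; apply: (@gB _ _ _ u (inl x)).
by exists y; apply: connect1; apply: (@gB _ _ _ u (inr y)).
Qed.

Lemma star_PI a b : isPI a -> isPI b -> isPI (star a b).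
Proof.
move=> PIa PIb; apply: PI_of; first exact: star_partition.
move=> u; case: (boolP (badpt a b (embO u))) => [bd|nb]; first by left; exact: star_pt.
right.
have hx : forall w, connect (genrel a b) (embO u) w -> ~~ badpt a b w.
  by move=> w c; rewrite -(bad_conn c).
suff [[x cx] [y cy]] : (exists x, connect (genrel a b) (embO u) (inl (inl x))) /\
   (exists y, connect (genrel a b) (embO u) (inr y)).
  split; [exists x|exists y]; rewrite pblock_star /relstar; apply/orP; right;
    by [rewrite cx | rewrite cy].
case: u nb hx => [x0|y0] nb hx.
  split; first by exists x0; exact: connect0.
  case: (nb_A (u := inl x0) PIa nb) => _ [y cy].
  have := hx _ cy; rewrite -[inl (inr y)]/(embB (inl y)) => nb2.
  case: (nb_B PIb nb2) => _ [y' cy']; exists y'; exact: connect_trans cy cy'.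
split; last by exists y0; exact: connect0.
case: (nb_B (u := inr y0) PIb nb) => [[y cy] _].
have := hx _ cy; rewrite -[inl (inr y)]/(embA (inr y)) => nb2.
case: (nb_A PIa nb2) => [[x cx] _]; exists x; exact: connect_trans cy cx.
Qed.

Lemma star_eq a b c : partition c setT ->
  (forall u v, relstar a b u v = (v \in pblock c u)) -> star a b = c.
Proof.
move=> pc H; apply: part_ext => //; first exact: star_partition.
by move=> u v; rewrite pblock_star H.
Qed.

Lemma permp_mul g h : star (permp g) (permp h) = permp (g * h).
Proof.
apply: star_eq; first exact: permp_part.
move=> u v; rewrite relabel ?permp_PI // !permp_pblock.
have E : forall u', pk h (psi g u') = g (pk (g * h) u').
  by case=> [x|y] //=; rewrite invMg permM permKV.
by rewrite !E (inj_eq (@perm_inj _ g)).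
Qed.

Lemma relabel_inv g a : isPI a -> star (permp g^-1) (star (permp g) a) = a.
Proof.
move=> PIa; apply: star_eq; first exact: PI_part.
move=> u v; rewrite relabel ?star_PI ?permp_PI // pblock_star relabel //.
have E : forall u', psi g (psi g^-1 u') = u' by case=> [x|y] //=; rewrite permKV.
by rewrite !E.
Qed.

Lemma relabel_pb g a u : isPI a ->
  pblock (star (permp g) a) u = [set v | psi g v \in pblock a (psi g u)].
Proof. by move=> PIa; apply/setP => v; rewrite pblock_star relabel // inE. Qed.

End Closure.

Section Points.
Variable n : nat.
Implicit Types (a b c : part n) (u v : pt n) (w : vt n) (g h : 'S_n).

Definition points c := [set u | pblock c u == [set u]].

Lemma M1 a b x : isPI a -> pblock a (inl x) = [set inl x] ->
  pblock (star a b) (inl x) = [set inl x].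
Proof.
move=> PIa h; apply: star_pt; apply: sing_bad.
by apply: (@singptA _ a b (inl x)) => //; exact: PI_part.
Qed.

Lemma M2 a b y : isPI b -> pblock b (inr y) = [set inr y] ->
  pblock (star a b) (inr y) = [set inr y].
Proof.
move=> PIb h; apply: star_pt; apply: sing_bad.
by apply: (@singptB _ a b (inr y)) => //; exact: PI_part.
Qed.

Lemma M3 a b x1 y1 : isPI a -> isPI b -> inr y1 \in pblock a (inl x1) ->
  pblock b (inl y1) = [set inl y1] -> pblock (star a b) (inl x1) = [set inl x1].
Proof.
move=> PIa PIb h1 h2; apply: star_pt; apply/existsP; exists (embB (inl y1)).
rewrite (@singptB _ a b (inl y1)) ?andbT //; last exact: PI_part.
apply: connect1; rewrite -[embB (inl y1)]/(embA (inr y1)).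
rewrite -[embO (inl x1)]/(embA (inl x1)).
by apply: gA => //; exact: PI_part.
Qed.

Lemma M4 a b y0 y1 : isPI a -> isPI b -> pblock a (inr y0) = [set inr y0] ->
  inr y1 \in pblock b (inl y0) -> pblock (star a b) (inr y1) = [set inr y1].
Proof.
move=> PIa PIb h1 h2; apply: star_pt; apply/existsP; exists (embA (inr y0)).
rewrite (@singptA _ a b (inr y0)) ?andbT //; last exact: PI_part.
apply: connect1; rewrite -[embA (inr y0)]/(embB (inl y0)).
rewrite -[embO (inr y1)]/(embB (inr y1)).
apply: gB; first exact: PI_part.
by rewrite (pblock_same (PI_part PIb) h2) pblock_self //; exact: PI_part.
Qed.

Lemma notzero a : isPI a -> a != zero ->
  exists x1 y1, inr y1 \in pblock a (inl x1).
Proof.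
move=> PIa nz; have pa := PI_part PIa.
case: (boolP [exists u, pblock a u != [set u]]) => [/existsP[u hu]|/existsPn H].
  case: (PI_line PIa hu) => [[x hx] [y hy]]; exists x, y.
  by rewrite (pblock_same pa hx).
case/negP: nz; apply/eqP; apply: part_ext => //; first exact: zero_part.
by move=> u v; rewrite zero_pblock; move/negPn: (H u) => /eqP ->.
Qed.

Lemma low_pres g a y : isPI a -> pblock a (inr y) = [set inr y] ->
  pblock (star (permp g) a) (inr y) = [set inr y].
Proof.
move=> PIa h; rewrite relabel_pb //= h; apply/setP => v; rewrite !inE.
by case: v => [x|y'].
Qed.

Lemma step a : isPI a -> a != zero -> points a != set0 ->
  exists g, points a \proper points (star a (star (permp g) a)).
Proof.
move=> PIa nz; have pa := PI_part PIa.
case: (notzero PIa nz) => x1 [y1 h1] /set0Pn [u0]; rewrite inE => /eqP hu0.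
have sub : forall g, points a \subset points (star a (star (permp g) a)).
  move=> g; apply/subsetP => u; rewrite !inE => /eqP; case: u => [x|y] h.
    by rewrite (M1 _ PIa h).
  by rewrite (M2 _ (star_PI (permp_PI g) PIa) (low_pres g PIa h)).
have nx1 : inl x1 \notin points a.
  rewrite inE; apply/eqP => e; by move: h1; rewrite e inE.
have ny1 : inr y1 \notin points a.
  rewrite inE; apply/eqP => e.
  have : inl x1 \in pblock a (inr y1) by rewrite (pblock_same pa h1) pblock_self.
  by rewrite e inE.
case: u0 hu0 => [x0|y0] hu0.
  exists (tperm y1 x0); rewrite properEneq sub andbT.
  apply/eqP => e; move/negP: nx1; apply; rewrite e inE; apply/eqP.
  apply: M3 (h1) _ => //; first exact: star_PI (permp_PI _) PIa.
  rewrite relabel_pb //; rewrite /= tpermL hu0; apply/setP => v; rewrite !inE.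
  case: v => [x|y] //=; apply/eqP/eqP => [[]|[->]]; last by rewrite tpermL.
  by move=> e2; congr inl; apply: (@perm_inj _ (tperm y1 x0)); rewrite e2 tpermL.
exists (tperm y0 x1); rewrite properEneq sub andbT.
apply/eqP => e; move/negP: ny1; apply; rewrite e inE; apply/eqP.
apply: M4 hu0 _ => //; first exact: star_PI (permp_PI _) PIa.
by rewrite relabel_pb // inE /= tpermL.
Qed.

End Points.

Section Units.
Variable n : nat.
Implicit Types (a b c : part n) (u v : pt n) (w : vt n) (g h : 'S_n).

Lemma isUnitP a : reflect (exists g, a = permp g) (isUnit a).
Proof.
apply: (iffP existsP) => [[g /eqP e]|[g e]]; exists g; first exact: e.
by apply/eqP.
Qed.

Lemma CL a : isPI a -> (forall x, pblock a (inl x) != [set inl x]) ->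
  (forall x x2, inl x2 \in pblock a (inl x) -> x2 = x) -> isUnit a.
Proof.
move=> PIa H1 H2; have pa := PI_part PIa.
have ex : forall x, exists y, inr y \in pblock a (inl x).
  by move=> x; case: (PI_line PIa (H1 x)).
pose m x := xchoose (ex x).
have mP : forall x, inr (m x) \in pblock a (inl x) by move=> x; exact: (xchooseP (ex x)).
have minj : injective m.
  move=> x x' e; apply: H2.
  have := mP x'; rewrite -e => h.
  have e1 := pblock_same pa (mP x); have e2 := pblock_same pa h.
  by rewrite -e2 e1 pblock_self.
pose p := perm minj.
apply/isUnitP; exists p; apply: part_ext => //; first exact: permp_part.
have K : forall u, pblock a u = pblock a (inl (pk p u)).
  case=> [x|y] //=; have h := mP ((p^-1)%g y).
  have my : m ((p^-1)%g y) = y by rewrite -{2}(permKV p y) /p permE.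
  by rewrite my in h; rewrite -(pblock_same pa h).
have K2 : forall x v, (v \in pblock a (inl x)) = (x == pk p v).
  move=> x v; have [_ ti _] := and3P pa.
  rewrite -(@eq_pblock _ a (inl x) v ti) ?(cover_partition pa) ?inE //.
  rewrite (K v) (@eq_pblock _ a (inl x) _ ti) ?(cover_partition pa) ?inE //.
  apply/idP/eqP => [/H2 //|->]; exact: pblock_self.
by move=> u v; rewrite permp_pblock (K u) K2.
Qed.

Lemma unit_left a b g : isPI a -> isPI b -> star a b = permp g -> isUnit a.
Proof.
move=> PIa PIb e; apply: CL => //.
  move=> x; apply/eqP => h; move: (permp_nopt g (inl x)).
  by rewrite -e (M1 _ PIa h) eqxx.
move=> x x2 h.
have nb : ~~ badpt a b (embO (inl x)).
  apply/negP => bd; move: (permp_nopt g (inl x)).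
  by rewrite -e (star_pt bd) eqxx.
have : inl x2 \in pblock (star a b) (inl x).
  rewrite pblock_star /relstar nb andbT; apply/orP; right.
  apply: connect1; rewrite -[embO (inl x)]/(embA (inl x)) -[embO (inl x2)]/(embA (inl x2)).
  by apply: gA => //; exact: PI_part.
by rewrite e permp_pblock /= => /eqP ->.
Qed.

End Units.

Section Fact.
Variable n : nat.
Implicit Types (a b c : part n) (u v : pt n) (w : vt n) (g h : 'S_n).

Lemma relstar_fin a b c u v : partition c setT ->
  connect (genrel a b) (embO u) (embO v) = (pblock c u == pblock c v) ->
  badpt a b (embO u) = (pblock c u == [set u]) ->
  relstar a b u v = (v \in pblock c u).
Proof.
move=> pc C B; rewrite /relstar C B.
case: (boolP (pblock c u == [set u])) => [/eqP e|ne]; rewrite ?andbF ?andbT ?orbF.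
  by rewrite e inE eq_sym.
have [_ ti _] := and3P pc.
rewrite (@eq_pblock _ c u v ti) ?(cover_partition pc) ?inE //.
by case: (eqVneq u v) => [->|] //=; rewrite pblock_self.
Qed.

Variables (x x2 : 'I_n).
Definition sk (u : pt n) : option 'I_n :=
  match u with inl v => Some (if v == x then x2 else v)
             | inr v => if v == x then None else Some v end.
Definition sP : part n := preim_partition sk setT.
Definition tk a (u : pt n) : option {set pt n} :=
  if u == inl x then None else Some (pblock a u).
Definition tP a : part n := preim_partition (tk a) setT.

Hypothesis x2x : x2 != x.

Lemma sk_ne u k : sk u = Some k -> k != x.
Proof.
case: u => [v|v] /=; first by case: eqP => [_|/eqP nv] [<-].
by case: eqP => // /eqP ne [<-].
Qed.

Lemma sk_blk u k : sk u = Some k -> (inl k \in pblock sP u) && (inr k \in pblock sP u).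
Proof.
move=> e; have ne := sk_ne e; rewrite /sP !preim_pblock e /= (negbTE ne).
by rewrite !eqxx.
Qed.

Lemma sP_sing u : pblock sP u = [set u] -> u = inr x.
Proof.
move=> h; case e: (sk u) => [k|].
  by move/andP: (sk_blk e); rewrite h !inE => [[/eqP <- /eqP]].
by clear h; case: u e => [v|v] //=; case: eqP => [->|].
Qed.

Lemma sP_PI : isPI sP.
Proof.
apply: PI_of; first exact: preim_part.
move=> u; case e: (sk u) => [k|].
  by right; case/andP: (sk_blk e) => h1 h2; split; [exists k|exists k].
left; apply/setP => v; rewrite preim_pblock e inE.
have -> : u = inr x by case: u e => [v'|v'] //=; case: eqP => [->|].
case: v => [v|v] //=; case: (eqVneq v x) => [->|nv]; rewrite ?eqxx //.
by apply/esym/eqP => [[/eqP]]; rewrite (negbTE nv).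
Qed.

Lemma sP_pt : points sP != set0.
Proof.
apply/set0Pn; exists (inr x); rewrite inE; apply/eqP/setP => v.
rewrite preim_pblock inE /= eqxx.
case: v => [v|v] //=; case: (eqVneq v x) => [->|nv]; rewrite ?eqxx //.
by apply/esym/eqP => [[/eqP]]; rewrite (negbTE nv).
Qed.

Variable a : part n.
Hypothesis PIa : isPI a.
Hypothesis x2in : inl x2 \in pblock a (inl x).

Let pa := PI_part PIa.

Lemma tP_pblock u v : (v \in pblock (tP a) u) = (tk a u == tk a v).
Proof. exact: preim_pblock. Qed.

Lemma pbx_ns : pblock a (inl x) != [set inl x].
Proof.
apply/eqP => e; move: x2in; rewrite e inE => /eqP [] /eqP; by rewrite (negbTE x2x).
Qed.

Lemma inlx2 : (inl x2 == inl x :> pt n) = false.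
Proof. apply/eqP => [[e]]; move: x2x; by rewrite e eqxx. Qed.

Lemma inl_neq (y : 'I_n) : y != x -> (inl y == inl x :> pt n) = false.
Proof. by move=> nv; apply/eqP => [[e]]; move: nv; rewrite e eqxx. Qed.

Lemma tP_sing u : u != inl x -> pblock (tP a) u = [set u] -> pblock a u = [set u].
Proof.
move=> ne h; apply/setP => v; rewrite inE; apply/idP/eqP => [hv|->]; last exact: pblock_self.
case: (eqVneq v (inl x)) => [ev|nv].
  subst v; have e1 := pblock_same pa hv.
  case: (PI_line PIa pbx_ns) => _ [y hy].
  have h1 : inl x2 \in pblock (tP a) u.
    by rewrite tP_pblock /tk (negbTE ne) inlx2 -e1 (pblock_same pa x2in).
  have h2 : inr y \in pblock (tP a) u.
    by rewrite tP_pblock /tk (negbTE ne) /= -e1 (pblock_same pa hy).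
  by move: h1 h2; rewrite h !inE => /eqP <-.
have : v \in pblock (tP a) u.
  by rewrite tP_pblock /tk (negbTE ne) (negbTE nv) (pblock_same pa hv).
by rewrite h inE => /eqP.
Qed.

Lemma tk_none v : (None == tk a v) = (v == inl x).
Proof. by rewrite /tk; case: (eqVneq v (inl x)). Qed.

Lemma tP_PI : isPI (tP a).
Proof.
apply: PI_of; first exact: preim_part.
move=> u; case: (eqVneq u (inl x)) => [->|ne].
  left; apply/setP => v; rewrite tP_pblock inE {1}/tk eqxx tk_none //.
case: (boolP (pblock a u == [set u])) => [/eqP e|ns].
  left; apply/setP => v; rewrite tP_pblock inE /tk (negbTE ne) e.
  case: (eqVneq v (inl x)) => [->|nv].
    rewrite ?eqxx; by apply/esym/eqP => e2; case/negP: ne; rewrite e2.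
  apply/eqP/eqP => [[] /setP /(_ v)|->]; last by rewrite e.
  by rewrite (pblock_self v pa) inE => /eqP.
right; case: (PI_line PIa ns) => [[x' hx] [y hy]]; split; last first.
  by exists y; rewrite tP_pblock /tk (negbTE ne) /= (pblock_same pa hy).
case: (eqVneq x' x) => [ex|nx].
  subst x'; exists x2; rewrite tP_pblock /tk (negbTE ne) /=.
  by rewrite inlx2 -(pblock_same pa hx) (pblock_same pa x2in).
exists x'; rewrite tP_pblock /tk (negbTE ne) /= (pblock_same pa hx).
have -> : (inl x' == inl x :> pt n) = false by apply/eqP => [[e]]; rewrite e eqxx in nx.
by [].
Qed.

Lemma tP_pt : points (tP a) != set0.
Proof.
apply/set0Pn; exists (inl x); rewrite inE; apply/eqP/setP => v.
by rewrite tP_pblock inE {1}/tk eqxx tk_none.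
Qed.

Definition rho (w : vt n) : pt n :=
  match w with inl (inl v) => inl (if v == x then x2 else v)
             | inl (inr v) => inl v | inr v => inr v end.

Lemma fact : star sP (tP a) = a.
Proof.
have ps := PI_part sP_PI; have pt := PI_part tP_PI.
pose k w := tk a (rho w).
have rhoB u : rho (embB u) = u by case: u.
have kA : forall u, k (embA u) =
   (if sk u is Some j then Some (pblock a (inl j)) else None).
  move=> u; rewrite /k /tk; case: u => [v|v] /=.
    case: (eqVneq v x) => [ev|nv]; first by rewrite inlx2.
    by rewrite inl_neq.
  case: (eqVneq v x) => [ev|nv]; first by rewrite ev eqxx.
  by rewrite inl_neq.
have H1 : forall w1 w2, genrel sP (tP a) w1 w2 -> k w1 = k w2.
  move=> w1 w2 /(genrelE ps pt) [] [u1 [v1 [hv -> ->]]].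
    by rewrite !kA; rewrite /sP preim_pblock in hv; rewrite (eqP hv).
  by rewrite /k !rhoB; rewrite tP_pblock in hv; rewrite (eqP hv).
have Hw : forall w, connect (genrel sP (tP a)) w (embB (rho w)).
  case=> [[v|v]|v] /=; try exact: connect0.
  apply: connect1; set j := (if v == x then x2 else v).
  rewrite -[inl (inl v)]/(embA (inl v)) -[inl (inr j)]/(embA (inr j)).
  apply: gA => //; rewrite /sP preim_pblock /= -/j.
  have jx : j != x by rewrite /j; case: (eqVneq v x).
  by rewrite (negbTE jx).
have H2 : forall w1 w2, k w1 = k w2 -> connect (genrel sP (tP a)) w1 w2.
  move=> w1 w2 e; apply: connect_trans (Hw w1) _.
  rewrite (conn_sym sP (tP a)); apply: connect_trans (Hw w2) _.
  by apply: connect1; apply: gB => //; rewrite tP_pblock -/(k w1) -/(k w2) e.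
have kO : forall u, k (embO u) = Some (pblock a u).
  case=> [v|v]; rewrite /k /tk /=.
    case: (eqVneq v x) => [->|nv]; first by rewrite inlx2 (pblock_same pa x2in).
    by rewrite inl_neq.
  by [].
apply: star_eq => // u v; apply: relstar_fin => //.
  by rewrite (key_conn H1 H2) !kO; apply/eqP/eqP => [[]|->].
rewrite (key_bad H1 H2) kO; apply/existsP/eqP => [[z /andP[/eqP e s]]|e].
  case: (singptE ps pt s) => [[u' [h zE]]|[u' [h zE]]].
    by move: e; rewrite zE (sP_sing h) /k /tk /= eqxx.
  move: e; rewrite zE /k rhoB /tk; case: (eqVneq u' (inl x)) => // ne [e].
  have := tP_sing ne h; rewrite -e => e2.
  by move: (pblock_self u pa); rewrite e2 inE => /eqP ->.
case: (eqVneq u (inl x)) => [eu|ne].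
  by move: pbx_ns; rewrite -eu e eqxx.
exists (embB u); rewrite /k rhoB /tk (negbTE ne) eqxx /=.
apply: singptB => //; apply/setP => v'; rewrite tP_pblock inE /tk (negbTE ne) e.
case: (eqVneq v' (inl x)) => [->|nv].
  rewrite ?eqxx; by apply/esym/eqP => e2; case/negP: ne; rewrite e2.
apply/eqP/eqP => [[] /setP /(_ v')|->]; last by rewrite e.
by rewrite (pblock_self v' pa) inE => /eqP.
Qed.

End Fact.

Section Main.
Variable n : nat.
Hypothesis hn : 1 < n.
Implicit Types (a b c : part n) (u v : pt n) (w : vt n) (g h : 'S_n).
Variable T : {set part n}.
Hypothesis HT : compl_isolated_subsemigroup T.

Lemma TPI a : a \in T -> isPI a.
Proof. by case: HT => /subsetP s _ _ _ /s; rewrite inE. Qed.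

Lemma clos a b : a \in T -> b \in T -> star a b \in T.
Proof. by case: HT => _ _ H _; apply: H. Qed.

Lemma isol a b : isPI a -> isPI b -> star a b \in T -> (a \in T) || (b \in T).
Proof. by case: HT => _ _ _ H PIa PIb; apply: H; rewrite inE. Qed.

Lemma sp a b : isPI a -> isPI b -> (a \in T) = (b \in T) -> (star a b \in T) = (a \in T).
Proof.
move=> PIa PIb e; case: (boolP (a \in T)) => ha.
  by apply: clos; rewrite // -e.
apply/negP => /(isol PIa PIb); by rewrite (negbTE ha) -e (negbTE ha).
Qed.

Lemma pow_closed (P : pred 'S_n) : P 1%g -> (forall g h, P g -> P h -> P (g * h)%g) ->
  forall g, P g -> P (g^-1)%g.
Proof.
move=> P1 PM g Pg; rewrite invg_expg; elim: (#[g]%g.-1) => [|k IH]; first by rewrite expg0.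
by rewrite expgS; apply: PM.
Qed.

Lemma units_same g : (permp g \in T) = (permp 1 \in T).
Proof.
have PM : forall g h, permp g \in T -> permp h \in T -> permp (g * h) \in T.
  by move=> g1 h1 a1 b1; rewrite -permp_mul; apply: clos.
have IS : forall g h, permp (g * h)%g \in T -> (permp g \in T) || (permp h \in T).
  by move=> g1 h1; rewrite -permp_mul; apply: isol; apply: permp_PI.
case: (boolP (permp 1 \in T)) => h1.
  apply/negP => /negP ng.
  have : permp (g * g^-1)%g \in T by rewrite mulgV.
  case/IS/orP => [|hg]; first by rewrite (negbTE ng).
  have := pow_closed (P := fun g => permp g \in T) h1 PM hg.
  by rewrite invgK (negbTE ng).
apply/negP => hg.
have PM' : forall g h, permp g \notin T -> permp h \notin T -> permp (g * h)%g \notin T.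
  by move=> g1 h1' a1 b1; apply/negP => /IS; rewrite (negbTE a1) (negbTE b1).
have hgi : permp g^-1%g \notin T.
  apply/negP => hgi; have := PM _ _ hg hgi; by rewrite mulgV (negbTE h1).
have := pow_closed (P := fun g => permp g \notin T) h1 PM' hgi.
by rewrite invgK hg.
Qed.

Lemma unit_inv g a : isPI a -> (star (permp g) a \in T) = (a \in T).
Proof.
move=> PIa; have e := relabel_inv g PIa.
have PI2 := star_PI (permp_PI g) PIa.
case: (boolP (permp 1 \in T)) => h1.
  have hg : permp g \in T by rewrite units_same.
  have hgi : permp g^-1%g \in T by rewrite units_same.
  apply/idP/idP => [h|h]; last exact: clos.
  by rewrite -e; apply: clos.
have hg : permp g \notin T by rewrite units_same.
have hgi : permp g^-1%g \notin T by rewrite units_same.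
apply/idP/idP => [/(isol (permp_PI g) PIa)|h].
  by rewrite (negbTE hg).
move: h; rewrite -{1}e => /(isol (permp_PI _) PI2); by rewrite (negbTE hgi).
Qed.

Lemma pointed_aux k : forall a, isPI a -> points a != set0 ->
  #|~: points a| <= k -> (a \in T) = (zero \in T).
Proof.
elim: k => [|k IH] a PIa pta le; (case: (eqVneq a zero) => [->//|nz]);
  case: (step PIa nz pta) => g pr;
  set c := star a (star (permp g) a);
  have PIc : isPI c by apply: star_PI => //; apply: star_PI => //; apply: permp_PI.
all: have lt : #|~: points c| < #|~: points a| by apply: proper_card; rewrite properC.
  by have := leq_trans lt le.
have ec : (c \in T) = (a \in T).
  apply: sp => //; first by apply: star_PI => //; apply: permp_PI.
  by rewrite unit_inv.
rewrite -ec; apply: IH => //.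
  case/set0Pn: pta => u hu; apply/set0Pn; exists u.
  by case/properP: pr => /subsetP /(_ u hu).
by rewrite -ltnS; apply: leq_trans lt le.
Qed.

Lemma pointed a : isPI a -> points a != set0 -> (a \in T) = (zero \in T).
Proof. by move=> PIa pta; apply: (pointed_aux PIa pta (leqnn _)). Qed.

Lemma nonunit a : isPI a -> ~~ isUnit a -> (a \in T) = (zero \in T).
Proof.
move=> PIa nu; case: (boolP (points a == set0)) => [/eqP p0|]; last exact: pointed.
case: (boolP [exists x, exists x2, (x2 != x) && (inl x2 \in pblock a (inl x))]).
  case/existsP => x /existsP [x2 /andP [nx hx]].
  have fa := fact nx PIa hx.
  have PIs := sP_PI nx; have PIt := tP_PI nx PIa hx.
  rewrite -fa sp //; first by rewrite pointed // (sP_pt x x2).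
  by rewrite !pointed // ?(sP_pt x x2) // (tP_pt x a).
move/existsPn => H; case/negP: nu; apply: CL => //.
  move=> x; apply/eqP => e.
  have : inl x \in points a by rewrite inE e.
  by rewrite p0 inE.
move=> x x2 h; move: (H x) => /existsPn /(_ x2); rewrite h andbT.
by move/negPn/eqP.
Qed.

Lemma zero_nonunit : ~~ isUnit (zero : part n).
Proof.
apply/negP => /isUnitP [g e].
have x0 : 'I_n := Ordinal (ltnW hn).
by move: (permp_nopt g (inl x0)); rewrite -e zero_pblock eqxx.
Qed.

End Main.

Theorem mainTheorem9 (n : nat) (hn : 1 < n) (T : {set part n}) :
  compl_isolated_subsemigroup T <->
  [\/ T = PIset n,
      T = [set a in PIset n | isUnit a]
    | T = [set a in PIset n | ~~ isUnit a]].
Proof.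
split.
- move=> HT.
  have Hu : forall a, isPI a -> isUnit a -> (a \in T) = (permp 1 \in T).
    by move=> a _ /isUnitP [g ->]; exact: units_same.
  have Hn := nonunit HT.
  case: (boolP (permp 1 \in T)) => h1; case: (boolP (zero \in T)) => h0.
  + constructor 1; apply/setP => a; rewrite inE; apply/idP/idP => [/(TPI HT)//|PIa].
    by case: (boolP (isUnit a)) => ua; [rewrite (Hu a PIa ua) | rewrite (Hn a PIa ua)].
  + constructor 2; apply/setP => a; rewrite !inE; apply/idP/andP => [ha|[PIa ua]].
      have PIa := TPI HT ha; split=> //; apply: contraT => nu.
      by move: ha; rewrite (Hn a PIa nu) (negbTE h0).
    by rewrite (Hu a PIa ua).
  + constructor 3; apply/setP => a; rewrite !inE; apply/idP/andP => [ha|[PIa ua]].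
      have PIa := TPI HT ha; split=> //; apply/negP => u.
      by move: ha; rewrite (Hu a PIa u) (negbTE h1).
    by rewrite (Hn a PIa ua).
  + exfalso; have [_ /set0Pn [a ha] _ _] := HT; have PIa := TPI HT ha.
    case: (boolP (isUnit a)) => ua.
      by move: ha; rewrite (Hu a PIa ua) (negbTE h1).
    by move: ha; rewrite (Hn a PIa ua) (negbTE h0).
- have PI1 := permp_PI (1 : 'S_n).
  have inPI : forall a : part n, (a \in PIset n) = isPI a by move=> a; rewrite inE.
  case=> ->; split.
  + exact: subxx.
  + by apply/set0Pn; exists (permp 1); rewrite inPI.
  + by move=> a b; rewrite !inPI; apply: star_PI.
  + by move=> a b ha _ _; rewrite ha.
  + by apply/subsetP => a; rewrite inE => /andP[].
  + by apply/set0Pn; exists (permp 1); rewrite !inE PI1; apply/isUnitP; exists 1%g.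
  + move=> a b; rewrite !inE => /andP[_ /isUnitP[g ->]] /andP[_ /isUnitP[h ->]].
    rewrite permp_mul permp_PI /=; apply/isUnitP; by exists (g * h)%g.
  + move=> a b; rewrite !inPI !inE => PIa PIb /andP[_ u].
    case/isUnitP: u => g e; by rewrite PIa (unit_left PIa PIb e).
  + by apply/subsetP => a; rewrite inE => /andP[].
  + by apply/set0Pn; exists zero; rewrite !inE zero_PI zero_nonunit.
  + move=> a b; rewrite !inE => /andP[PIa ua] /andP[PIb ub].
    rewrite star_PI //=.
    by apply/negP => /isUnitP [g e]; rewrite (unit_left PIa PIb e) in ua.
  + move=> a b; rewrite !inPI !inE => PIa PIb /andP[_ nu]; rewrite PIa PIb /=.
    case: (boolP (isUnit a)) => [/isUnitP [g ea]|//].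
    case: (boolP (isUnit b)) => [/isUnitP [h eb]|//].
    by move: nu; rewrite ea eb permp_mul; case/negP; apply/isUnitP; exists (g * h)%g.
Qed.
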